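(* Let $n,k\in\mathbb{N}$ with $1\le k\le n-1$. The map sending a weakly decreasing $\alpha=(a_1,\dots,a_n)\in PF_{n,k}$ (i.e. $a_1\ge a_2\ge\dots\ge a_n$) to the lattice path from $(0,n)$ to $(n,0)$ whose $i$-th east step goes from $(i-1,a_i-1)$ to $(i,a_i-1)$ for each $1\le i\le n$ (consecutive east steps joined by south steps) is a bijection from the set of weakly decreasing $k$-Naples parking functions of length $n$ onto the set of $k$-lattice paths of length $2n$. Equivalently, a weakly decreasing $\alpha\in[n]^n$ lies in $PF_{n,k}$ if and only if $a_i\le \min(n,\,n+k+1-i)$ for all $1\le i\le n$.
   Context: For $n\in\mathbb{N}$ let $[n]=\{1,\dots,n\}$ and $PP_n=[n]^n$. For an integer $k\ge 0$, the $k$-Naples parking rule: there are $n$ spots numbered $1,\dots,n$ west to east, initially empty; cars $c_1,\dots,c_n$ arrive in order, car $c_i$ preferring spot $a_i$. If spot $a_i$ is empty, $c_i$ parks there. Otherwise $c_i$ checks spots $a_i-1,\dots,a_i-k$ in this order (skipping those $<1$) and parks in the first empty one; if all are occupied, it drives east and parks in the first empty spot numbered greater than $a_i$, failing to park if none exists. $PF_{n,k}$ is the set of $\alpha\in PP_n$ for which all cars park. A $k$-lattice path of length $2n$ is a lattice path from $(0,n)$ to $(n,0)$ consisting of $n$ unit east steps $(1,0)$ and $n$ unit south steps $(0,-1)$, whose first step is a south step (so every east step lies at height at most $n-1$), and which never goes strictly above the line $y=n-x+k$; equivalently, if its $i$-th east step is at height $h_i$, then $n-1\ge h_1\ge h_2\ge\dots\ge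 h_n\ge 0$ and $h_i\le n-i+k$ for all $i$. *)

(* Defs.v *)
From mathcomp Require Import all_boot.
Set Implicit Arguments. Unset Strict Implicit. Unset Printing Implicit Defensive.

(* A preference list alpha = (a_1,...,a_n) is a seq nat; spots are 1..n. *)

Fixpoint first_empty (l occ : seq nat) : option nat :=
  match l with
  | [::] => None
  | p :: l' => if p \notin occ then Some p else first_empty l' occ
  end.

(* k-Naples rule: a car preferring spot a checks a, then a-1, ..., a-k
   (skipping spots < 1), then a+1, ..., n.  None = fails to park. *)
Definition naples_spot (n k : nat) (occ : seq nat) (a : nat) : option nat :=
  first_empty (a :: [seq a - i | i <- iota 1 k & i < a] ++ iota a.+1 (n - a)) occ.

Fixpoint naples_park (n k : nat) (occ : seq nat) (s : seq nat) : option (seq nat) :=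
  match s with
  | [::] => Some occ
  | a :: s' =>
      match naples_spot n k occ a with
      | Some p => naples_park n k (p :: occ) s'
      | None => None
      end
  end.

Definition is_naples_pf (n k : nat) (s : seq nat) : bool :=
  [&& size s == n, all (fun a => 0 < a <= n) s & naples_park n k [::] s].

(* Lattice paths as step sequences: true = east (1,0), false = south (0,-1). *)
(* After the first j steps the position is (x_j, y_j) with
   x_j = #east steps, y_j = n - #south steps. *)
Definition is_k_lattice_path (n k : nat) (p : seq bool) : bool :=
  [&& size p == 2 * n, count id p == n, count negb p == n,
      head true p == false &
      (* never strictly above y = n - x + k, i.e. y_j + x_j <= n + k *)
      all (fun j => (n - count negb (take j p)) + count id (take j p) <= n + k)
          (iota 0 (2 * n).+1)].

(* The path whose i-th east step is at height a_i - 1, starting at height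
   [h], joined by south steps, ending at (n,0). *)
Fixpoint path_aux (h : nat) (s : seq nat) : seq bool :=
  match s with
  | [::] => nseq h false
  | a :: s' => nseq (h - a.-1) false ++ true :: path_aux a.-1 s'
  end.

Definition path_of_pf (n : nat) (s : seq nat) : seq bool := path_aux n s.

Definition weakly_decr (s : seq nat) : bool := sorted geq s.

(* Main.v *)
Require Import Defs.
From mathcomp Require Import all_boot zify.
Set Implicit Arguments. Unset Strict Implicit.

Lemma first_empty_some l occ p : first_empty l occ = Some p -> p \in l /\ p \notin occ.
Proof.
elim: l => //= x l IH; case: ifP => [H [<-]|_ /IH [H1 H2]]; first by rewrite mem_head.
by rewrite in_cons H1 orbT.
Qed.

Lemma first_empty_none l occ : first_empty l occ = None -> {subset l <= occ}.
Proof.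
elim: l => //= x l IH; case: ifP => // /negbFE Hx /IH H y; rewrite in_cons.
by case/orP => [/eqP ->|/H].
Qed.

Definition spots n k a := a :: [seq a - i | i <- iota 1 k & i < a] ++ iota a.+1 (n - a).

Lemma spots_mem n k a x : x \in spots n k a -> [/\ a - k <= x, 0 < a -> 0 < x & a <= n -> x <= n].
Proof.
rewrite /spots in_cons mem_cat; case/orP => [/eqP ->|/orP[]]; first by split; lia.
- case/mapP => i; rewrite mem_filter mem_iota => /andP [Hi /andP [H1 H2]] ->; split; lia.
- rewrite mem_iota => /andP [H1 H2]; split; lia.
Qed.

Lemma spots_cover n k a x : 0 < x -> a - k <= x <= n -> a <= n -> x \in spots n k a.
Proof.
move=> H0 /andP [H1 H2] Han; rewrite /spots in_cons mem_cat.
case: (ltngtP x a) => Hxa; last by apply/orP; left; apply/eqP.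
- apply/orP; right; apply/orP; left; apply/mapP; exists (a - x); last by lia.
  rewrite mem_filter mem_iota; apply/andP; split; lia.
- apply/orP; right; apply/orP; right; rewrite mem_iota; lia.
Qed.

Lemma park_some n k s occ : uniq occ -> all (fun x => 0 < x <= n) occ ->
  all (fun a => 0 < a <= n) s -> size occ + size s <= n ->
  (forall i, i < size s -> nth 0 s i + (size occ + i) <= n + k) ->
  naples_park n k occ s.
Proof.
elim: s occ => //= a s IH occ Hu Ho /andP [Ha Hs] Hsz Hb.
rewrite /naples_spot -/(spots n k a).
case E: (first_empty _ _) => [p|].
- have [Hp Hpo] := first_empty_some E.
  have [_ P1 P2] := spots_mem Hp.
  apply: IH => //=; first by rewrite Hpo.
  + rewrite P1 ?P2 //; lia.
  + lia.
  + move=> i Hi; have := Hb i.+1 Hi; rewrite /=; lia.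
- have Hsub := first_empty_none E.
  pose lo := maxn 1 (a - k).
  have Hle : size (iota lo (n.+1 - lo)) <= size occ.
    apply: uniq_leq_size; first exact: iota_uniq.
    move=> x; rewrite mem_iota => Hx; apply: Hsub; apply: spots_cover; lia.
  have := Hb 0 erefl; rewrite size_iota /lo /= in Hle; move=> /= H; lia.
Qed.

Lemma count_ge_bound n L occ : uniq occ -> all (fun x => 0 < x <= n) occ ->
  count (fun x => L <= x) occ <= n.+1 - L.
Proof.
move=> Hu Ho; rewrite -size_filter.
have -> : n.+1 - L = size (iota L (n.+1 - L)) by rewrite size_iota.
apply: uniq_leq_size; first by rewrite filter_uniq.
move=> x; rewrite mem_filter mem_iota => /andP [H1 H2].
have := allP Ho x H2; lia.
Qed.

Lemma park_count n k s occ occ' L : naples_park n k occ s = Some occ' ->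
  uniq occ -> all (fun x => 0 < x <= n) occ -> all (fun a => 0 < a <= n) s ->
  count (fun x => L <= x) occ + count (fun a => L + k <= a) s <= n.+1 - L.
Proof.
elim: s occ => [|a s IH] occ /=.
  by move=> _ Hu Ho _; rewrite addn0; apply: count_ge_bound.
rewrite /naples_spot -/(spots n k a).
case E: (first_empty _ _) => [p|] // Hp Hu Ho /andP [Ha Hs].
have [Hm Hpo] := first_empty_some E.
have [P0 P1 P2] := spots_mem Hm.
have := IH (p :: occ) Hp; rewrite /= Hpo Hu P1 ?P2 //=; last by lia.
move=> /(_ isT Ho Hs).
case: (leqP (L + k) a) => H1 /=; case: (leqP L p) => H2 /=; try lia.
all: try lia.
Qed.

Fixpoint dec (h : nat) (p : seq bool) : seq nat :=
  match p with
  | [::] => [::]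
  | b :: p' => if b then h.+1 :: dec h p' else dec h.-1 p'
  end.

Lemma dec_nseq h m p : dec h (nseq m false ++ p) = dec (h - m) p.
Proof. by elim: m h => [|m IH] h /=; rewrite ?subn0 // IH; congr dec; lia. Qed.

Lemma dec_path s h : all (fun a => 0 < a) s -> path geq h.+1 s -> dec h (path_aux h s) = s.
Proof.
elim: s h => [|a s IH] h /=.
  by move=> _ _; rewrite -[nseq h false]cats0 dec_nseq.
move=> /andP [Ha Hs] /andP [Hah Hp]; rewrite dec_nseq.
have -> : h - (h - a.-1) = a.-1 by lia.
rewrite /= IH //; last by rewrite prednK.
by rewrite prednK.
Qed.

Lemma path_geq_weak x y s : x <= y -> path geq x s -> path geq y s.
Proof. by case: s => //= a s Hxy /andP [H1 ->]; rewrite andbT (leq_trans H1 Hxy). Qed.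

Lemma dec_ub p h : path geq h.+1 (dec h p).
Proof.
elim: p h => [|b p IH] h //=; case: b => /=.
  by rewrite leqnn IH.
case: h => [|h] /=; first exact: IH.
by apply: (path_geq_weak _ (IH h)).
Qed.

Lemma path_aux_S h s : path geq h.+1 s -> path_aux h.+1 s = false :: path_aux h s.
Proof.
case: s => [|a s] //= /andP [Ha _].
have -> : h.+1 - a.-1 = (h - a.-1).+1 by lia.
by [].
Qed.

Lemma path_dec p h : count negb p = h -> path_aux h (dec h p) = p.
Proof.
elim: p h => [|b p IH] h /=; first by move <-.
case: b => /= Hc.
  by rewrite subnn /= IH.
move: Hc; case: h => [|h] // [Hc].
by rewrite path_aux_S ?dec_ub // IH.
Qed.

Lemma size_dec p h : size (dec h p) = count id p.
Proof. by elim: p h => [|b p IH] h //=; case: b => /=; rewrite IH. Qed.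

Lemma dec_pos p h : all (fun a => 0 < a) (dec h p).
Proof. by elim: p h => [|b p IH] h //=; case: b => /=; rewrite IH. Qed.

Lemma count_path_aux s h : all (fun a => 0 < a) s -> path geq h.+1 s ->
  [/\ count id (path_aux h s) = size s, count negb (path_aux h s) = h &
      size (path_aux h s) = h + size s].
Proof.
elim: s h => [|a s IH] h /=.
  by move=> _ _; rewrite addn0 size_nseq; split; elim: h => //= h ->.
move=> /andP [Ha Hs] /andP [Hah Hp].
have := IH a.-1 Hs; rewrite prednK // => /(_ Hp) [E1 E2 E3].
have C1 m : count id (nseq m false) = 0 by elim: m.
have C2 m : count negb (nseq m false) = m by elim: m => //= m ->.
rewrite !count_cat size_cat /= C1 C2 E1 E2 E3 size_nseq; split; lia.
Qed.

Lemma prefix_to_dec p y x B :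
  (forall j, y - count negb (take j p) + (x + count id (take j p)) <= B) ->
  forall i, i < size (dec y p) -> nth 0 (dec y p) i + i + x <= B.
Proof.
elim: p y x => [|b p IH] y x //= H.
case: b H => H /=.
- move=> [|i] /= Hi.
    by have := H 1; rewrite /= take0 /=; lia.
  suff : nth 0 (dec y p) i + i + x.+1 <= B by lia.
  apply: (IH y x.+1 _ i Hi) => j.
  by have := H j.+1; rewrite /=; lia.
- move=> i Hi; apply: (IH y.-1 x _ i Hi) => j; have := H j.+1; rewrite /=; lia.
Qed.

Lemma dec_to_prefix p y x B : y + x <= B ->
  (forall i, i < size (dec y p) -> nth 0 (dec y p) i + i + x <= B) ->
  forall j, y - count negb (take j p) + (x + count id (take j p)) <= B.
Proof.
elim: p y x => [|b p IH] y x /= Hyx H [|j] /=; rewrite ?addn0 ?subn0 //.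
case: b H => H /=.
- have Hy : y + x.+1 <= B by have := H 0 erefl; rewrite /=; lia.
  suff : y - count negb (take j p) + (x.+1 + count id (take j p)) <= B by lia.
  apply: IH => // i Hi; have := H i.+1 Hi; rewrite /=; lia.
- have := IH y.-1 x _ H j; lia.
Qed.

Lemma geq_trans : transitive geq.
Proof. by move=> a b c H1 H2; apply: leq_trans H2 H1. Qed.

Lemma path_geq_all x s : path geq x s -> all (fun a => a <= x) s.
Proof.
elim: s x => [|a s IH] x //= /andP [H1 H2]; rewrite H1 /=.
by apply/allP => b /(allP (IH _ H2)) Hb; apply: leq_trans Hb H1.
Qed.

Lemma char n k s : size s = n -> all (fun a => 0 < a <= n) s -> sorted geq s ->
  is_naples_pf n k s <-> (forall i, i < n -> nth 0 s i + i <= n + k).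
Proof.
move=> Hsz Hr Hso; rewrite /is_naples_pf Hsz eqxx Hr /=; split.
- case E: (naples_park n k [::] s) => [occ'|] // _ i Hi.
  rewrite leqNgt; apply/negP => Hlt.
  have := park_count (n.+1 - i) E isT isT Hr; rewrite /= add0n.
  have Hc : i.+1 <= count (fun a => n.+1 - i + k <= a) s.
    rewrite -(cat_take_drop i.+1 s) count_cat.
    suff -> : count (fun a => n.+1 - i + k <= a) (take i.+1 s) = i.+1 by lia.
    have Hst : size (take i.+1 s) = i.+1 by rewrite size_takel // Hsz.
    rewrite -{2}Hst; apply/eqP; rewrite -all_count; apply/(all_nthP 0) => j Hj.
    rewrite Hst in Hj; rewrite nth_take //.
    have : geq (nth 0 s j) (nth 0 s i).
      apply: (sorted_leq_nth geq_trans leqnn 0 Hso); rewrite ?inE ?Hsz //; lia.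
    rewrite /=; lia.
  lia.
- move=> H; have := @park_some n k s [::] isT isT Hr.
  rewrite /= Hsz leqnn; apply => // i Hi; rewrite add0n; exact: H.
Qed.

Lemma pf_facts n k s : weakly_decr s -> is_naples_pf n k s ->
  [/\ size s = n, all (fun a => 0 < a <= n) s, all (fun a => 0 < a) s &
      path geq n.+1 s].
Proof.
move=> Hd /andP [/eqP Hsz /andP [Hr _]]; split => //.
  by apply/allP => a /(allP Hr) /andP [].
case: s Hd Hr {Hsz} => //= a s -> /andP [/andP [_ Ha] _]; rewrite andbT; lia.
Qed.

Theorem theorem1p3 (n k : nat) (hk1 : 1 <= k) (hkn : k <= n - 1) :
  [/\ (forall s : seq nat, weakly_decr s -> is_naples_pf n k s ->
         is_k_lattice_path n k (path_of_pf n s)),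
      (forall s t : seq nat, weakly_decr s -> is_naples_pf n k s ->
         weakly_decr t -> is_naples_pf n k t ->
         path_of_pf n s = path_of_pf n t -> s = t),
      (forall p : seq bool, is_k_lattice_path n k p ->
         exists2 s : seq nat, weakly_decr s && is_naples_pf n k s &
           path_of_pf n s = p) &
      (forall s : seq nat, size s = n -> all (fun a => 0 < a <= n) s ->
         weakly_decr s ->
         (is_naples_pf n k s <->
          forall i : nat, i < n -> nth 0 s i <= minn n (n + k - i)))].
Proof.
have Hn : 2 <= n by lia.
split.
- move=> s Hd Hpf; have [Hsz Hr Hpos Hp] := pf_facts Hd Hpf.
  have Hb := (char k Hsz Hr Hd).1 Hpf.
  rewrite /path_of_pf /is_k_lattice_path.
  have [E1 E2 E3] := count_path_aux Hpos Hp.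
  apply/and5P; split; rewrite ?E1 ?E2 ?E3 ?Hsz ?addnn -?mul2n //.
    case: s Hsz Hr {Hp Hd Hpf Hpos Hb E1 E2 E3} => [|a s] /=; first lia.
    move=> _ /andP [/andP [_ Ha] _].
    by have -> : n - a.-1 = (n - a.-1).-1.+1 by lia.
  apply/allP => j _.
  have := dec_to_prefix (p := path_aux n s) (y := n) (x := 0) (B := n + k) _ _ j.
  rewrite add0n; apply; first lia.
  rewrite dec_path // Hsz => i Hi; rewrite addn0; exact: Hb.
- move=> s t Hds Hs Hdt Ht; rewrite /path_of_pf => E.
  have [_ _ Hps Hs'] := pf_facts Hds Hs.
  have [_ _ Hpt Ht'] := pf_facts Hdt Ht.
  by rewrite -(dec_path Hps Hs') E dec_path.
- move=> p /and5P [/eqP Hsz /eqP Hid /eqP Hneg Hhd /allP Hpre].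
  exists (dec n p); last by rewrite /path_of_pf path_dec.
  case: p Hsz Hid Hneg Hhd Hpre => [|[] p'] //.
  move=> Hsz Hid Hneg _ Hpre; rewrite /= in Hid; rewrite [dec _ _]/=.
  have Hsz' : size (dec n.-1 p') = n by rewrite size_dec.
  have Hub := dec_ub p' n.-1; rewrite prednK in Hub; last by lia.
  have Hso : sorted geq (dec n.-1 p') by apply: path_sorted Hub.
  have Hr : all (fun a => 0 < a <= n) (dec n.-1 p').
    apply/allP => a Ha; rewrite (allP (dec_pos p' n.-1) a Ha).
    exact: (allP (path_geq_all Hub) a Ha).
  rewrite /weakly_decr Hso /=; apply/(char k Hsz' Hr Hso) => i Hi.
  have := @prefix_to_dec (false :: p') n 0 (n + k) _ i.
  rewrite /= addn0; apply; last by rewrite Hsz'.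
  move=> j; rewrite add0n.
  case: (leqP j (2 * n)) => Hj.
    have Hm : j \in iota 0 (2 * n).+1 by rewrite mem_iota; lia.
    exact: Hpre j Hm.
  rewrite take_oversize; last by lia.
  have Hm : 2 * n \in iota 0 (2 * n).+1 by rewrite mem_iota; lia.
  have := Hpre _ Hm; rewrite take_oversize //; lia.
- move=> s Hsz Hr Hd; rewrite (char k Hsz Hr Hd); split => H i Hi; have := H i Hi.
  + have Hin : nth 0 s i \in s by apply: mem_nth; rewrite Hsz.
    have := allP Hr _ Hin.
    rewrite leq_min; lia.
  + rewrite leq_min; lia.
Qed.
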